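(* For $n \ge 2$, if $n \pmod 6 \in \{2,4\}$, then the path $P_n$ is $\gamma_{\rm tg}$-critical.
   Context: Total domination game: Dominator and Staller alternately choose vertices, each chosen vertex must be adjacent to some vertex not yet totally dominated; the game ends when no legal move exists; Dominator minimizes, Staller maximizes the number of moves; $\gamma_{\rm tg}(G)$ is the number of moves in the Dominator-start game under optimal play. $G|v$ is $G$ with $v$ declared already totally dominated, with $\gamma_{\rm tg}(G|v)$ defined analogously. $G$ is $\gamma_{\rm tg}$-critical if $\gamma_{\rm tg}(G|v)<\gamma_{\rm tg}(G)$ for all vertices $v$. *)

(* Defs.v *)
From mathcomp Require Import all_boot.
Set Implicit Arguments. Unset Strict Implicit. Unset Printing Implicit Defensive.

Section TotalDominationGame.
Variables (T : finType) (adj : rel T).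

Definition nbhd (v : T) : {set T} := [set u | adj v u].

(* S is the set of vertices already totally dominated.  A vertex v is a
   legal move iff it is adjacent to some vertex not yet totally dominated. *)
Definition legal (S : {set T}) (v : T) : bool := [exists u, adj v u && (u \notin S)].

Definition seq_min (s : seq nat) : nat :=
  if s is x :: xs then foldr minn x xs else 0.
Definition seq_max (s : seq nat) : nat := foldr maxn 0 s.

(* Number of remaining moves under optimal play; dom_turn = Dominator to
   move.  Each move strictly enlarges S, so fuel #|T|.+1 is sufficient. *)
Fixpoint game_value (fuel : nat) (dom_turn : bool) (S : {set T}) : nat :=
  match fuel with
  | 0 => 0
  | f.+1 =>
    let moves := [seq v <- enum T | legal S v] in
    if moves is [::] then 0 else
    let vals := [seq (game_value f (~~ dom_turn) (S :|: nbhd v)).+1 | v <- moves] in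
    if dom_turn then seq_min vals else seq_max vals
  end.

Definition gamma_tg : nat := game_value #|T|.+1 true set0.

(* gamma_tg(G|v): v declared already totally dominated. *)
Definition gamma_tg_pre (v : T) : nat := game_value #|T|.+1 true [set v].

Definition gamma_tg_critical : Prop := forall v : T, gamma_tg_pre v < gamma_tg.

End TotalDominationGame.

Definition path_adj (n : nat) : rel 'I_n :=
  fun i j => (i.+1 == j :> nat) || (j.+1 == i :> nat).
Arguments path_adj n i j : clear implicits.

(* Main.v *)
Require Import Defs.
From mathcomp Require Import all_boot zify.
Set Implicit Arguments. Unset Strict Implicit. Unset Printing Implicit Defensive.

Fixpoint rl (acc : nat) (L : seq bool) : seq nat :=
  match L with
  | [::] => [:: acc]
  | true :: L' => rl acc.+1 L'
  | false :: L' => acc :: rl 0 L'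
  end.

Definition base k := (2 * k + 1) %/ 3.
Definition c2 k := k.+1 %/ 3 - k %/ 3.
Definition M (g : nat -> nat) L := sumn (map g (rl 0 L)).
Definition V (dom : bool) L :=
  if dom then M base L + M c2 L %/ 2 else M base L + (M c2 L).+1 %/ 2.

Lemma rl_cat_false acc X Y : rl acc (X ++ false :: Y) = rl acc X ++ rl 0 Y.
Proof. by elim: X acc => [|[] X IH] acc //=; rewrite IH. Qed.

Lemma rl_nseq acc k Y : rl acc (nseq k true ++ Y) = rl (acc + k) Y.
Proof. by elim: k acc => [|k IH] acc /=; rewrite ?addn0 // IH addnS. Qed.

Lemma rl_nseq0 acc k : rl acc (nseq k true) = [:: acc + k].
Proof. by rewrite -[nseq _ _]cats0 rl_nseq. Qed.

Section Mg.
Variable g : nat -> nat.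
Hypothesis g0 : g 0 = 0.

Lemma M_nil : M g [::] = 0. Proof. by rewrite /M /= g0. Qed.
Lemma M_cat_false X Y : M g (X ++ false :: Y) = M g X + M g Y.
Proof. by rewrite /M rl_cat_false map_cat sumn_cat. Qed.
Lemma M_false Y : M g (false :: Y) = M g Y.
Proof. by have := M_cat_false [::] Y; rewrite M_nil. Qed.
Lemma M_nseq k : M g (nseq k true) = g k.
Proof. by rewrite /M rl_nseq0 /= addn0. Qed.
Lemma M_lastF X Y : last false X = false -> M g (X ++ Y) = M g X + M g Y.
Proof.
case/lastP: X => [|X b]; first by rewrite M_nil.
rewrite last_rcons => ->; by rewrite cat_rcons M_cat_false -cats1 M_cat_false M_nil addn0.
Qed.
Lemma M_headF X Y : head false Y = false -> M g (X ++ Y) = M g X + M g Y.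
Proof.
case: Y => [|b Y] /=; first by rewrite cats0 M_nil addn0.
by move->; rewrite M_cat_false M_false.
Qed.
Lemma M_allF L : true \notin L -> M g L = 0.
Proof.
elim: L => [|b L IH]; first by rewrite M_nil.
rewrite in_cons negb_or; case/andP; case: b => // _ h; by rewrite M_false IH.
Qed.
End Mg.

Lemma base0 : base 0 = 0. Proof. by []. Qed.
Lemma c20 : c2 0 = 0. Proof. by []. Qed.

Fixpoint clr (p : nat) (L : seq bool) : seq bool :=
  match L with
  | [::] => [::]
  | b :: L' => if p is p'.+1 then b :: clr p' L'
               else false :: (if L' is _ :: L'' then false :: L'' else [::])
  end.

Lemma clr_cat X x Y :
  clr (size X) (X ++ x :: Y) = X ++ false :: (if Y is _ :: Y0 then false :: Y0 else [::]).
Proof. by elim: X => //= b X ->. Qed.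

Lemma clr_catF X x Y : head false Y = false -> clr (size X) (X ++ x :: Y) = X ++ false :: Y.
Proof. by rewrite clr_cat; case: Y => [|[] Y]. Qed.

Lemma size_clr p L : size (clr p L) = size L.
Proof.
elim: L p => [|b L IH] [|p] //=; last by rewrite IH.
by case: L {IH} => [|c L].
Qed.

Lemma nth_clr p L i : nth false (clr p L) i = nth false L i && (i != p) && (i != p.+1).
Proof.
elim: L p i => [|b L IH] [|p] [|i] //=.
- by rewrite andbF.
- case: L {IH} => [|c L] /=; first by rewrite !nth_nil.
  case: i => [|i] /=; first by rewrite andbF.
  by rewrite !andbT.
- by rewrite !andbT.
- by rewrite IH.
Qed.

Lemma split_trail X : exists X0 t, X = X0 ++ nseq t true /\ last false X0 = false.
Proof.
elim/last_ind: X => [|X b [X0 [t [-> h]]]]; first by exists [::], 0.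
case: b.
- exists X0, t.+1; split => //. by rewrite -cats1 -catA -addn1 nseqD.
- exists (rcons (X0 ++ nseq t true) false), 0; by rewrite cats0 last_rcons.
Qed.

Lemma split_lead Y : exists h Y0, Y = nseq h true ++ Y0 /\ head false Y0 = false.
Proof.
elim: Y => [|b Y [h [Y0 [-> hh]]]]; first by exists 0, [::].
case: b; first by exists h.+1, Y0.
by exists 0, (false :: nseq h true ++ Y0).
Qed.

Lemma M_split g (g0 : g 0 = 0) X0 A Y0 : last false X0 = false -> head false Y0 = false ->
  M g (X0 ++ A ++ Y0) = M g X0 + M g A + M g Y0.
Proof. by move=> h1 h2; rewrite (M_lastF g0 _ h1) (M_headF g0 _ h2) addnA. Qed.

Lemma M_nseq_cat g t s : M g (nseq t true ++ s) = sumn (map g (rl t s)).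
Proof. by rewrite /M rl_nseq. Qed.

Lemma univ' X x Z : x || head false Z ->
  V true (X ++ x :: Z) <= (V false (clr (size X) (X ++ x :: Z))).+1 /\
  (V true (clr (size X) (X ++ x :: Z))).+1 <= V false (X ++ x :: Z).
Proof.
move=> hxy; rewrite clr_cat.
have [X0 [t [-> hX0]]] := split_trail X.
case: Z hxy => [|y Y] /= hxy.
- case: x hxy => // _.
  rewrite -!catA /V !(M_lastF base0 _ hX0) !(M_lastF c20 _ hX0) !M_nseq_cat /=.
  rewrite /base /c2; lia.
- have [h [Y0 [-> hY0]]] := split_lead Y.
  have -> : (X0 ++ nseq t true) ++ [:: x, y & nseq h true ++ Y0] =
            X0 ++ (nseq t true ++ [:: x, y & nseq h true]) ++ Y0 by rewrite -!catA.
  have -> : (X0 ++ nseq t true) ++ [:: false, false & nseq h true ++ Y0] =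
            X0 ++ (nseq t true ++ [:: false, false & nseq h true]) ++ Y0 by rewrite -!catA.
  rewrite /V !(M_split base0 _ hX0 hY0) !(M_split c20 _ hX0 hY0) !M_nseq_cat.
  case: x hxy; case: y => //= _; rewrite !rl_nseq0 /= /base /c2; lia.
Qed.

Lemma univ L p : p < size L -> nth false L p || nth false L p.+1 ->
  V true L <= (V false (clr p L)).+1 /\ (V true (clr p L)).+1 <= V false L.
Proof.
move=> hp hxy.
have E : L = take p L ++ nth false L p :: drop p.+1 L by rewrite -drop_nth // cat_take_drop.
have hX : size (take p L) = p by rewrite size_take hp.
have H : nth false L p || head false (drop p.+1 L) by rewrite -nth0 nth_drop addn0.
by have := univ' (take p L) H; rewrite -E hX.
Qed.

Lemma locate (P : pred nat) acc L : has P (rl acc L) ->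
  exists X k Y, [/\ P k, nseq acc true ++ L = X ++ nseq k true ++ Y,
                    last false X = false & head false Y = false].
Proof.
elim: L acc => [|[] L IH] acc /=.
- rewrite orbF => hP; exists [::], acc, [::]; by rewrite cats0.
- move=> /IH [X [k [Y [hk E h1 h2]]]]; exists X, k, Y; split => //.
  by rewrite -E -addn1 nseqD -catA.
- case/orP => [hP | /IH [X [k [Y [hk E h1 h2]]]]].
  + by exists [::], acc, (false :: L).
  + exists (nseq acc true ++ false :: X), k, Y; split => //.
    * by rewrite -catA /= -E.
    * by rewrite last_cat.
Qed.

Lemma has_pos_acc L acc : (true \in L) || (0 < acc) -> has (fun k => 0 < k) (rl acc L).
Proof.
elim: L acc => [|[] L IH] acc /=.
- by rewrite orbF.
- by move=> _; apply: IH; rewrite orbT.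
- rewrite in_cons /= => /orP [h|h]; last by rewrite h.
  by rewrite IH ?orbT // h.
Qed.

Lemma sumn_has (g : nat -> nat) (s : seq nat) : 0 < sumn (map g s) -> has (fun k => 0 < g k) s.
Proof.
elim: s => //= x s IH; case: (posnP (g x)) => [->|h] //=.
Qed.

Lemma exist_move L : true \in L ->
  (exists p, [/\ p < size L, nth false L p & V false L = (V true (clr p L)).+1]) /\
  (exists p, [/\ p < size L, nth false L p & V true L = (V false (clr p L)).+1]).
Proof.
move=> hL.
have [X [k [Y [[hk hC] E h1 h2]]]] : exists X k Y,
  [/\ 0 < k /\ (M c2 L = 0 \/ 0 < c2 k), L = X ++ nseq k true ++ Y,
      last false X = false & head false Y = false].
{ case: (posnP (M c2 L)) => hC.
  - have := @has_pos_acc L 0 (introT orP (or_introl hL)).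
    move/locate => [X [k [Y [hk E h1 h2]]]]; exists X, k, Y; split => //; split => //; by left.
  - have := sumn_has hC; move/locate => [X [k [Y [hk E h1 h2]]]].
    exists X, k, Y; split => //; split; [by move: hk; rewrite /c2; lia|by right]. }
have MX g (g0 : g 0 = 0) : M g L = M g X + g k + M g Y.
  by rewrite E (M_split g0 _ h1 h2) M_nseq.
case: k hk hC E MX => // k _ hC E MX.
have E1 : L = (X ++ nseq k true) ++ true :: Y by rewrite E -catA -addn1 nseqD -catA.
have C1 : clr (size (X ++ nseq k true)) L = (X ++ nseq k true) ++ false :: Y.
  by rewrite E1 clr_catF.
have M1 g (g0 : g 0 = 0) : M g ((X ++ nseq k true) ++ false :: Y) = M g X + g k + M g Y.
  by rewrite (M_cat_false g) (M_lastF g0 _ h1) M_nseq.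
have S1 : size (X ++ nseq k true) < size L by rewrite E1 !size_cat /=; lia.
have N1 : nth false L (size (X ++ nseq k true)).
  by rewrite E1 nth_cat ltnn subnn.
split.
- exists (size (X ++ nseq k true)); split => //.
  rewrite C1 /V !MX // !M1 //; move: hC; rewrite !MX // /base /c2; lia.
- case: k hC E E1 C1 M1 S1 N1 MX => [|k] hC E E1 C1 M1 S1 N1 MX.
  + exists (size (X ++ nseq 0 true)); split => //.
    rewrite C1 /V !MX // !M1 //; move: hC; rewrite !MX // /base /c2; lia.
  + have E2 : L = (X ++ nseq k true) ++ [:: true, true & Y].
      by rewrite E -catA -addn2 nseqD -catA.
    exists (size (X ++ nseq k true)); split.
    * by rewrite E2 !size_cat /=; lia.
    * by rewrite E2 nth_cat ltnn subnn.
    * rewrite {2}E2 clr_cat /V (M_cat_false base) (M_cat_false c2) !MX //.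
      rewrite !(M_false base0) !(M_false c20) !(M_lastF _ _ h1) ?M_nseq //.
      move: hC; rewrite !MX // /base /c2; lia.
Qed.

Lemma fmin_mem x (s : seq nat) : foldr minn x s \in x :: s.
Proof.
elim: s => [|y s IH] /=; first by rewrite mem_head.
rewrite /minn; case: ifP => _; first by rewrite in_cons mem_head orbT.
by move: IH; rewrite !in_cons => /orP [->|->]; rewrite ?orbT.
Qed.

Lemma fmin_le x (s : seq nat) y : y \in x :: s -> foldr minn x s <= y.
Proof.
elim: s y => [|z s IH] y /=; first by rewrite in_cons in_nil orbF => /eqP ->.
rewrite !in_cons geq_min => /orP [/eqP->|/orP [/eqP->|h]].
- by rewrite (IH x) ?mem_head ?orbT.
- by rewrite leqnn.
- by rewrite (IH y) ?orbT // in_cons h orbT.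
Qed.

Lemma seq_minE (s : seq nat) a : (forall x, x \in s -> a <= x) -> a \in s -> seq_min s = a.
Proof.
case: s => [//|x s] hle hin /=.
by apply/eqP; rewrite eqn_leq fmin_le // hle // fmin_mem.
Qed.

Lemma seq_maxE (s : seq nat) a : (forall x, x \in s -> x <= a) -> a \in s -> seq_max s = a.
Proof.
move=> hle hin.
have le : forall y, y \in s -> y <= foldr maxn 0 s.
  elim: s {hle hin} => [|z s IH] y //=.
  rewrite in_cons leq_max; case/orP => [/eqP ->|h]; first by rewrite leqnn.
  by rewrite IH ?orbT.
have mem : s != [::] -> foldr maxn 0 s \in s.
  elim: s {hle hin le} => [|y s IH] //= _.
  rewrite /maxn; case: ifP => h; last by rewrite mem_head.
  case: s IH h => [|z s] IH h; first by rewrite ltn0 in h.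
  by rewrite in_cons IH ?orbT.
apply/eqP; rewrite /seq_max eqn_leq hle ?le //.
by apply: mem; case: s hin {hle le}.
Qed.

Lemma game_valueS (T : finType) (adj : rel T) f dom S :
  game_value adj f.+1 dom S =
  (let moves := [seq v <- enum T | legal adj S v] in
   if moves is [::] then 0 else
   let vals := [seq (game_value adj f (~~ dom) (S :|: nbhd adj v)).+1 | v <- moves] in
   if dom then seq_min vals else seq_max vals).
Proof. by []. Qed.

Section PathGame.
Variable m : nat.
Hypothesis m_pos : 0 < m.
Local Notation n := (m.*2).

Definition qpos (u : 'I_n) : nat := if odd u then n - (u : nat)./2 else (u : nat)./2.
Definition ppos (v : 'I_n) : nat := if odd v then (v : nat)./2 else n - (v : nat)./2.

Lemma adjE (u v : 'I_n) : path_adj n v u = (qpos u == ppos v) || (qpos u == (ppos v).+1).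
Proof.
rewrite /path_adj /qpos /ppos.
have := ltn_ord u; have := ltn_ord v.
move: (nat_of_ord u) (nat_of_ord v) => a b ha hb.
case: (odd a) / idP => h1; case: (odd b) / idP => h2; lia.
Qed.

Lemma qpos_le u : qpos u <= n.
Proof. rewrite /qpos; have := ltn_ord u; case: (odd u) / idP => h; lia. Qed.

Lemma qpos_neq u : qpos u != m.
Proof. rewrite /qpos; have := ltn_ord u; case: (odd u) / idP => h; lia. Qed.

Lemma ppos_le v : ppos v <= n.
Proof. rewrite /ppos; have := ltn_ord v; case: (odd v) / idP => h; lia. Qed.

Lemma qpos_inj : injective qpos.
Proof.
move=> u w; rewrite /qpos => E; apply: val_inj => /=.
move: E; have := ltn_ord u; have := ltn_ord w.
case: (odd u) / idP => h1; case: (odd w) / idP => h2; lia.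
Qed.

Lemma qpos_surj p : p <= n -> p != m -> exists u, qpos u = p.
Proof.
move=> h1 h2; case: (ltnP p m) => h3.
- have hu : p.*2 < n by lia.
  exists (Ordinal hu); rewrite /qpos /=; case: ifP => ?; lia.
- have hu : (n - p).*2.+1 < n by lia.
  exists (Ordinal hu); rewrite /qpos /=; case: ifP => ?; lia.
Qed.

Lemma ppos_surj p : p <= n -> p != m -> exists v, ppos v = p.
Proof.
move=> h1 h2; case: (ltnP p m) => h3.
- have hu : p.*2.+1 < n by lia.
  exists (Ordinal hu); rewrite /ppos /=; case: ifP => ?; lia.
- have hu : (n - p).*2 < n by lia.
  exists (Ordinal hu); rewrite /ppos /=; case: ifP => ?; lia.
Qed.

Definition Lst (S : {set 'I_n}) : seq bool :=
  mkseq (fun p => [exists u, (qpos u == p) && (u \notin S)]) n.+1.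

Lemma size_Lst S : size (Lst S) = n.+1.
Proof. by rewrite size_mkseq. Qed.

Lemma nth_Lst S i : nth false (Lst S) i = [exists u, (qpos u == i) && (u \notin S)].
Proof.
case: (ltnP i n.+1) => h; first by rewrite nth_mkseq.
rewrite nth_default ?size_Lst //; symmetry; apply/existsP => [[u /andP [/eqP hu _]]].
by have := qpos_le u; rewrite hu; lia.
Qed.

Lemma Lst_move S v : Lst (S :|: nbhd (path_adj n) v) = clr (ppos v) (Lst S).
Proof.
apply: (@eq_from_nth _ false); first by rewrite size_clr !size_Lst.
move=> i _; rewrite nth_clr !nth_Lst.
apply/existsP/idP.
- case=> u /andP [/eqP hu]; rewrite in_setU in_set negb_or adjE hu => /andP [h1 h2].
  move: h2; rewrite negb_or => /andP [-> ->]; rewrite !andbT.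
  by apply/existsP; exists u; rewrite hu eqxx.
- case/andP => /andP [/existsP [u /andP [/eqP hu hS]] h1] h2; exists u.
  by rewrite hu eqxx in_setU in_set negb_or hS adjE hu /= negb_or h1.
Qed.

Lemma legalE S v : legal (path_adj n) S v =
  nth false (Lst S) (ppos v) || nth false (Lst S) (ppos v).+1.
Proof.
rewrite !nth_Lst /legal; apply/existsP/orP.
- case=> u /andP []; rewrite adjE => /orP [/eqP h|/eqP h] hS; [left|right];
  by apply/existsP; exists u; rewrite h eqxx.
- by case=> /existsP [u /andP [/eqP h hS]]; exists u; rewrite adjE h eqxx ?orbT.
Qed.

Lemma nth_Lst_m S : nth false (Lst S) m = false.
Proof.
rewrite nth_Lst; apply/existsP => [[u /andP [/eqP h _]]].
by have := qpos_neq u; rewrite h eqxx.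
Qed.

Lemma nomove S : (forall v, ~~ legal (path_adj n) S v) -> forall dom, V dom (Lst S) = 0.
Proof.
move=> hv dom.
have hT : true \notin Lst S.
  apply/negP => /(nthP false) [i hi]; rewrite nth_Lst => /existsP [u /andP [_ hu]].
  have [w hw] : exists w : 'I_n, path_adj n w u.
    case: (ltnP u.+1 n) => h.
    - by exists (Ordinal h); rewrite /path_adj /= eqxx orbT.
    - have h' : u.-1 < n by have := ltn_ord u; lia.
      exists (Ordinal h'); rewrite /path_adj /=; apply/orP; left; apply/eqP; have := ltn_ord u; have := m_pos; lia.
  by have := hv w; rewrite /legal => /existsP; apply; exists u; rewrite hw.
by rewrite /V !(M_allF _ hT); case: dom.
Qed.

Lemma card_dec S v : legal (path_adj n) S v ->
  #|~: (S :|: nbhd (path_adj n) v)| < #|~: S|.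
Proof.
move=> /existsP [u /andP [hu hS]]; apply: proper_card; apply/properP; split.
- by rewrite setCS subsetUl.
- by exists u; rewrite !in_setC ?in_setU ?in_set ?hS ?hu ?orbT.
Qed.

Lemma valueE f : forall dom S, #|~: S| <= f ->
  game_value (path_adj n) f dom S = V dom (Lst S).
Proof.
elim: f => [|f IH] dom S hS.
- rewrite /=; symmetry; apply: nomove => v; apply/negP => /card_dec; lia.
rewrite game_valueS /=.
set moves := [seq v <- enum 'I_n | legal (path_adj n) S v].
have memM v : (v \in moves) = legal (path_adj n) S v by rewrite mem_filter mem_enum andbT.
case E: moves => [|w ws].
- symmetry; apply: nomove => v; apply/negP; by rewrite -memM E.
rewrite -E.
have -> : [seq (game_value (path_adj n) f (~~ dom) (S :|: nbhd (path_adj n) v)).+1 | v <- moves]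
   = [seq (V (~~ dom) (clr (ppos v) (Lst S))).+1 | v <- moves].
  apply/eq_in_map => v; rewrite memM => hl; rewrite IH ?Lst_move //.
  by have := card_dec hl; lia.
have hT : true \in Lst S.
  have : w \in moves by rewrite E mem_head.
  rewrite memM legalE => /orP [] h; apply/(nthP false);
  [exists (ppos w) | exists (ppos w).+1] => //; apply: contraTT h => h;
  by rewrite nth_default // leqNgt.
have [[ps [hps1 hps2 hps3]] [pd [hpd1 hpd2 hpd3]]] := exist_move hT.
have getv p : p < size (Lst S) -> nth false (Lst S) p ->
    exists2 v, v \in moves & ppos v = p.
  move=> h1 h2; have h3 : p != m by apply: contraTneq h2 => ->; rewrite nth_Lst_m.
  rewrite size_Lst in h1; have [v hv] := ppos_surj h1 h3.
  by exists v => //; rewrite memM legalE hv h2.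
have U v : v \in moves -> V true (Lst S) <= (V false (clr (ppos v) (Lst S))).+1 /\
    (V true (clr (ppos v) (Lst S))).+1 <= V false (Lst S).
  rewrite memM legalE => hl; apply: univ => //; rewrite size_Lst ltnS; exact: ppos_le.
case: dom => /=.
- apply: seq_minE.
  + by move=> x /mapP [v hv ->]; case: (U v hv).
  + have [v hv hp] := getv pd hpd1 hpd2; apply/mapP; exists v => //; by rewrite hp.
- apply: seq_maxE.
  + by move=> x /mapP [v hv ->]; case: (U v hv).
  + have [v hv hp] := getv ps hps1 hps2; apply/mapP; exists v => //; by rewrite hp.
Qed.


Lemma nth_cat_nseq a Y i : nth false (nseq a true ++ false :: Y) i =
  if i < a then true else if i == a then false else nth false Y (i - a.+1).
Proof.
rewrite nth_cat size_nseq nth_nseq; case: ltngtP => h //.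
- by have -> : i - a = (i - a.+1).+1 by lia.
- by rewrite h subnn.
Qed.

Lemma Lst0 : Lst set0 = nseq m true ++ false :: nseq m true.
Proof.
apply: (@eq_from_nth _ false); first by rewrite size_Lst size_cat /= !size_nseq; lia.
move=> i; rewrite size_Lst => hi; rewrite nth_Lst nth_cat_nseq nth_nseq.
have -> : [exists u, (qpos u == i) && (u \notin set0)] = (i <= n) && (i != m).
  apply/existsP/idP.
  - case=> u /andP [/eqP <- _]; by rewrite qpos_le qpos_neq.
  - case/andP=> h1 h2; have [u hu] := qpos_surj h1 h2; exists u; by rewrite hu eqxx in_set0.
case: ltngtP => h; rewrite /= ?andbT; try case: ifP => ?; lia.
Qed.

Lemma Lst1 v : Lst [set v] =
  nseq (minn (qpos v) m) true ++ false :: nseq (maxn (qpos v) m - minn (qpos v) m).-1 true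
  ++ false :: nseq (n - maxn (qpos v) m) true.
Proof.
have hq := qpos_le v; have hq' := qpos_neq v.
apply: (@eq_from_nth _ false); first by rewrite size_Lst size_cat /= size_cat /= !size_nseq; lia.
move=> i; rewrite size_Lst => hi; rewrite nth_Lst !nth_cat_nseq !nth_nseq.
have -> : [exists u, (qpos u == i) && (u \notin [set v])] = (i <= n) && (i != m) && (i != qpos v).
  apply/existsP/idP.
  - case=> u /andP [/eqP <-]; rewrite in_set1 => huv; rewrite qpos_le qpos_neq /=.
    by apply: contra huv => /eqP /qpos_inj ->.
  - case/andP=> /andP [h1 h2] h3; have [u hu] := qpos_surj h1 h2; exists u.
    rewrite hu eqxx in_set1 /=; apply: contra h3 => /eqP <-; by rewrite hu.
move: hq hq'; set j := qpos v => hq hq'.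
case: (ltngtP j m) => hjm; last by rewrite hjm eqxx in hq'.
all: repeat case: ifP => ?; lia.
Qed.

Lemma M3 g a b c : M g (nseq a true ++ false :: nseq b true ++ false :: nseq c true) = g a + g b + g c.
Proof. by rewrite !(M_cat_false g) !M_nseq addnA. Qed.

Lemma M2 g a c : M g (nseq a true ++ false :: nseq c true) = g a + g c.
Proof. by rewrite !(M_cat_false g) !M_nseq. Qed.

Lemma gammaE : gamma_tg (path_adj n) = V true (Lst set0).
Proof. by rewrite /gamma_tg valueE // (leq_trans (max_card _)). Qed.

Lemma gamma_preE v : gamma_tg_pre (path_adj n) v = V true (Lst [set v]).
Proof. by rewrite /gamma_tg_pre valueE // (leq_trans (max_card _)). Qed.

Hypothesis m3 : m %% 3 != 0.

Lemma crit : gamma_tg_critical (path_adj n).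
Proof.
move=> v; rewrite gamma_preE gammaE Lst0 Lst1 /V M2 M3 M2 M3 /base /c2.
have := qpos_le v; have := qpos_neq v; move: (qpos v) => j h1 h2.
case: (ltngtP j m) => hjm; last by rewrite hjm eqxx in h1.
all: lia.
Qed.

End PathGame.

Theorem corollary3p7 (n : nat) :
  2 <= n -> (n %% 6 == 2) || (n %% 6 == 4) ->
  gamma_tg_critical (path_adj n).
Proof.
move=> h1 h2.
have E : n = (n./2).*2 by lia.
rewrite E; apply: crit; lia.
Qed.
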